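(* Fix $\alpha\in(0,1)$ and let $\mathcal{D}_\alpha=\{d\in(0,\min\{(1-\alpha)\varphi_{\max},\psi_{\max}\}): \psi_\alpha^{-1}(d)<s_{\rm in}\}$, where $$\psi_\alpha^{-1}(d)=\varphi^{-1}\!\left(\frac{d}{1-\alpha}\right)+\frac{\psi^{-1}(d)}{\alpha\beta\gamma}.$$ Then $\mathcal D_\alpha$ is an interval (of the form $(0,\psi_\alpha(s_{\rm in}))$), $f_0^*(\alpha,d)=\big(s_{\rm in}-\psi_\alpha^{-1}(d)\big)\dfrac{\alpha\beta\gamma\, d}{\mu^{-1}(d)}>0$ on $\mathcal D_\alpha$, and $d\mapsto f_0^*(\alpha,d)$ is strictly log-concave on $\mathcal D_\alpha$.
   Context: All parameters $s_{\rm in},\gamma,\beta,\varphi_{\max},k_s,\rho_{\max},k_v,q_{\min},\mu_{\max}$ are strictly positive. $\varphi(s)=\frac{\varphi_{\max}s}{k_s+s}$, $\rho(v)=\frac{\rho_{\max}v}{k_v+v}$ on $[0,\infty)$, $\mu(q)=\mu_{\max}(1-q_{\min}/q)$ on $[q_{\min},\infty)$, with inverses $\varphi^{-1}:[0,\varphi_{\max})\to[0,\infty)$, $\mu^{-1}:[0,\mu_{\max})\to[q_{\min},\infty)$, $\rho^{-1}:[0,\rho_{\max})\to[0,\infty)$. $\psi_{\max}=\frac{\mu_{\max}\rho_{\max}}{\rho_{\max}+q_{\min}\mu_{\max}}$ and $\psi^{-1}(y)=\rho^{-1}(y\,\mu^{-1}(y))$ for $y\in[0,\psi_{\max})$. $f_0^*(\alpha,d)=\frac{d\,(v_{\rm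 in}^*(\alpha,d)-\psi^{-1}(d))}{\mu^{-1}(d)}$ with $v_{\rm in}^*(\alpha,d)=\alpha\beta\gamma\big(s_{\rm in}-\varphi^{-1}(d/(1-\alpha))\big)$. *)

(* Defs.v *)
From Stdlib Require Import Reals.
Open Scope R_scope.

Record params := mkParams {
  s_in : R; gamma : R; beta : R; phi_max : R; k_s : R;
  rho_max : R; k_v : R; q_min : R; mu_max : R }.

Definition params_pos (p : params) : Prop :=
  0 < s_in p /\ 0 < gamma p /\ 0 < beta p /\ 0 < phi_max p /\ 0 < k_s p /\
  0 < rho_max p /\ 0 < k_v p /\ 0 < q_min p /\ 0 < mu_max p.

Definition phi (p : params) (s : R) : R := phi_max p * s / (k_s p + s).
Definition rho (p : params) (v : R) : R := rho_max p * v / (k_v p + v).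
Definition mu (p : params) (q : R) : R := mu_max p * (1 - q_min p / q).

(* Their inverses, in closed form:
   phi_inv : [0,phi_max) -> [0,oo), rho_inv : [0,rho_max) -> [0,oo),
   mu_inv : [0,mu_max) -> [q_min,oo). *)
Definition phi_inv (p : params) (y : R) : R := k_s p * y / (phi_max p - y).
Definition rho_inv (p : params) (y : R) : R := k_v p * y / (rho_max p - y).
Definition mu_inv (p : params) (y : R) : R := q_min p * mu_max p / (mu_max p - y).

Definition psi_max (p : params) : R :=
  mu_max p * rho_max p / (rho_max p + q_min p * mu_max p).

Definition psi_inv (p : params) (y : R) : R := rho_inv p (y * mu_inv p y).

Definition vin_star (p : params) (alpha d : R) : R :=
  alpha * beta p * gamma p * (s_in p - phi_inv p (d / (1 - alpha))).

Definition f0_star (p : params) (alpha d : R) : R :=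
  d * (vin_star p alpha d - psi_inv p d) / mu_inv p d.

Definition psi_alpha_inv (p : params) (alpha d : R) : R :=
  phi_inv p (d / (1 - alpha)) + psi_inv p d / (alpha * beta p * gamma p).

Definition D_alpha (p : params) (alpha d : R) : Prop :=
  0 < d < Rmin ((1 - alpha) * phi_max p) (psi_max p) /\ psi_alpha_inv p alpha d < s_in p.

(* Main.v *)
Require Import Defs.
From Stdlib Require Import Reals Lra Psatz.
Open Scope R_scope.

Lemma ln_le' x y : 0 < x -> x <= y -> ln x <= ln y.
Proof. intros hx [h|h]. left; apply ln_increasing; auto. subst; lra. Qed.

Lemma ln_tangent u z : 0<u -> 0<z ->
  ln u <= ln z + (u/z - 1) /\ (u<>z -> ln u < ln z + (u/z-1)).
Proof.
  intros hu hz.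
  assert (hw : 0 < u/z) by (apply Rdiv_lt_0_compat; auto).
  assert (e: ln u = ln z + ln (u/z)).
  { rewrite <- ln_mult by auto. f_equal. field. lra. }
  rewrite e.
  assert (E := exp_ln (u/z) hw).
  split.
  - pose proof (exp_ineq1_le (ln (u/z))). lra.
  - intro hne. assert (H: ln (u/z) <> 0).
    { intro h0. rewrite h0, exp_0 in E.
      assert (Hu : u = (u/z)*z) by (field; lra). rewrite <- E in Hu. lra. }
    pose proof (exp_ineq1 _ H). lra.
Qed.

Lemma ln_concave u v t : 0<u -> 0<v -> 0<t<1 ->
  t*ln u + (1-t)*ln v <= ln (t*u+(1-t)*v) /\
  (u<>v -> t*ln u + (1-t)*ln v < ln (t*u+(1-t)*v)).
Proof.
  intros hu hv ht.
  assert (hz: 0<t*u+(1-t)*v) by nra.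
  destruct (ln_tangent u _ hu hz) as [A1 A2].
  destruct (ln_tangent v _ hv hz) as [B1 B2].
  assert (Ez: t*(u/(t*u+(1-t)*v)-1) + (1-t)*(v/(t*u+(1-t)*v)-1) = 0)
    by (field; lra).
  split.
  - nra.
  - intro hne. assert (H: u<>t*u+(1-t)*v) by (intro; apply hne; nra).
    specialize (A2 H). nra.
Qed.

Lemma frac_convex M x y t : 0<M -> 0<x<M -> 0<y<M -> 0<t<1 ->
  (t*x+(1-t)*y)/(M-(t*x+(1-t)*y)) <= t*(x/(M-x)) + (1-t)*(y/(M-y)).
Proof.
  intros.
  assert (hu: 0<M-x) by lra. assert (hv: 0<M-y) by lra.
  assert (hw: 0<M-(t*x+(1-t)*y)) by nra.
  assert (E: t*(x/(M-x)) + (1-t)*(y/(M-y)) - (t*x+(1-t)*y)/(M-(t*x+(1-t)*y))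
     = M*t*(1-t)*(x-y)^2/((M-x)*(M-y)*(M-(t*x+(1-t)*y)))) by (field; lra).
  assert (0 <= M*t*(1-t)*(x-y)^2/((M-x)*(M-y)*(M-(t*x+(1-t)*y)))).
  { unfold Rdiv. apply Rmult_le_pos.
    - apply Rmult_le_pos.
      + assert (0 < M*t) by nra. assert (0 < 1 - t) by lra. nra.
      + apply pow2_ge_0.
    - left. apply Rinv_0_lt_compat. apply Rmult_lt_0_compat; [|lra].
      apply Rmult_lt_0_compat; lra. }
  lra.
Qed.

Lemma frac_incr M x y : 0<x<M -> 0<y<M -> x<y -> x/(M-x) < y/(M-y).
Proof.
  intros.
  assert (E: y/(M-y) - x/(M-x) = M*(y-x)/((M-x)*(M-y))) by (field; lra).
  assert (0 < M*(y-x)/((M-x)*(M-y))).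
  { assert (0<M-x) by lra. assert (0<M-y) by lra. assert (0<y-x) by lra.
    apply Rdiv_lt_0_compat; apply Rmult_lt_0_compat; lra. }
  lra.
Qed.

Theorem lemma2 (p : params) (Hp : params_pos p) (alpha : R) (Ha : 0 < alpha < 1) :
  (* D_alpha is the interval (0, psi_alpha(s_in)) *)
  (exists c : R,
      0 < c < Rmin ((1 - alpha) * phi_max p) (psi_max p) /\
      psi_alpha_inv p alpha c = s_in p /\
      (forall d, D_alpha p alpha d <-> 0 < d < c)) /\
  (* formula for f0* and positivity on D_alpha *)
  (forall d, D_alpha p alpha d ->
      f0_star p alpha d =
        (s_in p - psi_alpha_inv p alpha d) * (alpha * beta p * gamma p * d) / mu_inv p d /\
      0 < f0_star p alpha d) /\
  (* strict log-concavity of d |-> f0*(alpha,d) on D_alpha *)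
  (forall x y t, D_alpha p alpha x -> D_alpha p alpha y -> x <> y -> 0 < t < 1 ->
      t * ln (f0_star p alpha x) + (1 - t) * ln (f0_star p alpha y)
        < ln (f0_star p alpha (t * x + (1 - t) * y))).
Proof.
  destruct p as [s gam bet Phi ks rho kv qm mum].
  unfold params_pos in Hp; cbn [s_in gamma beta phi_max k_s rho_max k_v q_min mu_max] in Hp.
  destruct Hp as (hs & hg & hb & hP & hks & hr & hkv & hq & hm).
  unfold D_alpha, psi_max.
  cbn [s_in gamma beta phi_max k_s rho_max k_v q_min mu_max].
  set (P := {| s_in := s |}).
  set (A := 1 - alpha).
  set (a := alpha*bet*gam).
  set (psm := mum*rho/(rho+qm*mum)).
  set (m := Rmin (A*Phi) psm).
  set (K := kv*qm*mum/(rho+qm*mum)/a).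
  set (gg := fun d => ks*(d/(A*Phi-d)) + K*(d/(psm-d))).
  assert (hA : 0 < A) by (unfold A; lra).
  assert (ha : 0 < a) by (unfold a; apply Rmult_lt_0_compat; [nra|lra]).
  assert (hK : 0 < K).
  { unfold K. apply Rdiv_lt_0_compat; auto. apply Rdiv_lt_0_compat; [|nra].
    apply Rmult_lt_0_compat; [nra|lra]. }
  assert (hpsm : 0 < psm) by (unfold psm; apply Rdiv_lt_0_compat; nra).
  assert (hpsm2 : psm < mum).
  { unfold psm. apply (Rmult_lt_reg_r (rho+qm*mum)); [nra|].
    unfold Rdiv. rewrite Rmult_assoc, Rinv_l by nra.
    assert (0 < mum*(qm*mum)) by (apply Rmult_lt_0_compat; nra). nra. }
  assert (hm1 : m <= A*Phi) by apply Rmin_l.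
  assert (hm2 : m <= psm) by apply Rmin_r.
  assert (hm0 : 0 < m) by (apply Rmin_pos; nra).
  assert (Hg : forall d, 0 < d < m -> psi_alpha_inv P alpha d = gg d).
  { intros d hd. unfold P, psi_alpha_inv, phi_inv, psi_inv, rho_inv, mu_inv.
    cbn [s_in gamma beta phi_max k_s rho_max k_v q_min mu_max].
    fold A. unfold gg, K, psm. fold a.
    assert (h1 : d*(rho+qm*mum) < mum*rho).
    { assert (d < psm) by lra. unfold psm in H.
      apply (Rmult_lt_compat_r (rho+qm*mum)) in H; [|nra].
      unfold Rdiv in H. rewrite Rmult_assoc, Rinv_l in H by nra. lra. }
    assert (A*Phi - d <> 0) by lra.
    assert (mum - d <> 0) by lra.
    assert (rho * (mum - d) - d*(qm*mum) <> 0) by nra.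
    assert (mum*rho - d*(rho+qm*mum) <> 0) by nra.
    assert (rho+qm*mum <> 0) by nra.
    field. repeat split; try lra. }
  assert (Hinc : forall x y, 0 < x < m -> 0 < y < m -> x < y -> gg x < gg y).
  { intros x y hx hy hxy. unfold gg.
    assert (x/(A*Phi-x) < y/(A*Phi-y)) by (apply frac_incr; lra).
    assert (x/(psm-x) < y/(psm-y)) by (apply frac_incr; lra).
    nra. }
  assert (Hconv : forall x y t, 0 < x < m -> 0 < y < m -> 0 < t < 1 ->
     gg (t*x+(1-t)*y) <= t * gg x + (1-t) * gg y).
  { intros x y t hx hy ht. unfold gg.
    assert (h1 := frac_convex (A*Phi) x y t ltac:(lra) ltac:(lra) ltac:(lra) ht).
    assert (h2 := frac_convex psm x y t ltac:(lra) ltac:(lra) ltac:(lra) ht).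
    apply (Rmult_le_compat_l ks) in h1; [|lra].
    apply (Rmult_le_compat_l K) in h2; [|lra].
    lra. }
  assert (Hgpos : forall d, 0 < d < m -> 0 < gg d).
  { intros d hd. unfold gg.
    assert (0 < d/(A*Phi-d)) by (apply Rdiv_lt_0_compat; lra).
    assert (0 < d/(psm-d)) by (apply Rdiv_lt_0_compat; lra).
    nra. }
  assert (Part1 : exists c, 0 < c < m /\ gg c = s).
  { set (h := fun d => ks*d*(psm-d) + K*d*(A*Phi-d) - s*(A*Phi-d)*(psm-d)).
    assert (Hh : forall d, 0 < d < m -> h d = (A*Phi-d)*(psm-d)*(gg d - s)).
    { intros d hd. unfold h, gg. field. split; lra. }
    assert (Hd1 : exists d1, 0 < d1 < m /\ s < gg d1).
    { unfold m, Rmin in *. destruct (Rle_dec (A*Phi) psm).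
      - exists (s*(A*Phi)/(s+ks)). 
        assert (0 < s*(A*Phi)/(s+ks)) by (apply Rdiv_lt_0_compat; nra).
        assert (s*(A*Phi)/(s+ks) < A*Phi).
        { apply (Rmult_lt_reg_r (s+ks)); [lra|]. unfold Rdiv.
          rewrite Rmult_assoc, Rinv_l by lra. nra. }
        split; [lra|]. unfold gg.
        assert (E: ks * ((s*(A*Phi)/(s+ks)) / (A*Phi - s*(A*Phi)/(s+ks))) = s)
          by (field; split; nra).
        assert (0 < (s*(A*Phi)/(s+ks))/(psm - s*(A*Phi)/(s+ks)))
          by (apply Rdiv_lt_0_compat; lra).
        nra.
      - exists (s*psm/(s+K)).
        assert (0 < s*psm/(s+K)) by (apply Rdiv_lt_0_compat; nra).
        assert (s*psm/(s+K) < psm).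
        { apply (Rmult_lt_reg_r (s+K)); [lra|]. unfold Rdiv.
          rewrite Rmult_assoc, Rinv_l by lra. nra. }
        split; [lra|]. unfold gg.
        assert (E: K * ((s*psm/(s+K)) / (psm - s*psm/(s+K))) = s)
          by (field; split; nra).
        assert (0 < (s*psm/(s+K))/(A*Phi - s*psm/(s+K)))
          by (apply Rdiv_lt_0_compat; lra).
        nra. }
    destruct Hd1 as [d1 [hd1 hgd1]].
    assert (hc : continuity h) by (unfold h; reg).
    assert (h0 : h 0 < 0).
    { unfold h. assert (0 < A*Phi) by (apply Rmult_lt_0_compat; lra).
      assert (0 < s*(A*Phi)*psm) by (apply Rmult_lt_0_compat; [apply Rmult_lt_0_compat|]; lra).
      replace (ks * 0 * (psm - 0) + K * 0 * (A * Phi - 0) - s * (A * Phi - 0) * (psm - 0))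
        with (- (s*(A*Phi)*psm)) by ring. lra. }
    assert (h1 : 0 < h d1).
    { rewrite Hh by lra. apply Rmult_lt_0_compat; [apply Rmult_lt_0_compat|]; lra. }
    destruct (IVT h 0 d1 hc ltac:(lra) h0 h1) as [c [hc1 hc2]].
    assert (c <> 0) by (intro; subst; lra).
    assert (c <> d1) by (intro; subst; lra).
    exists c. split; [lra|].
    rewrite Hh in hc2 by lra.
    assert (0 < (A*Phi-c)*(psm-c)) by (apply Rmult_lt_0_compat; lra).
    destruct (Rmult_integral _ _ hc2); lra. }
  destruct Part1 as [c [hc hgc]].
  assert (HD : forall d, (0 < d < m /\ psi_alpha_inv P alpha d < s) <-> 0 < d < c).
  { intro d; split.
    - intros [hd hd2]. rewrite Hg in hd2 by auto. split; [lra|].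
      destruct (Rlt_le_dec d c) as [|hle]; auto.
      destruct hle as [hlt|heq].
      + assert (gg c < gg d) by (apply Hinc; lra). lra.
      + subst. lra.
    - intros hd. split; [lra|]. rewrite Hg by lra. rewrite <- hgc. apply Hinc; lra. }
  assert (Hf : forall d, 0 < d < m /\ psi_alpha_inv P alpha d < s ->
     f0_star P alpha d = (s - psi_alpha_inv P alpha d) * (alpha*bet*gam*d) / mu_inv P d /\ 0 < f0_star P alpha d).
  { intros d [hd hd2].
    assert (Ef : f0_star P alpha d = (s - psi_alpha_inv P alpha d) * (alpha*bet*gam*d) / mu_inv P d).
    { unfold f0_star, vin_star, psi_alpha_inv, mu_inv, P.
      cbn [s_in gamma beta phi_max k_s rho_max k_v q_min mu_max].
      fold a. field. split; lra. }
    split; auto. rewrite Ef. apply Rdiv_lt_0_compat.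
    - apply Rmult_lt_0_compat; [lra|]. fold a. apply Rmult_lt_0_compat; lra.
    - unfold mu_inv, P. cbn [q_min mu_max]. apply Rdiv_lt_0_compat; nra. }
  split; [|split].
  - exists c. split; [lra|]. split; [rewrite Hg by lra; auto|]. exact HD.
  - exact Hf.
  - intros x y t hx hy hxy ht.
    set (c0 := a/(qm*mum)).
    assert (hc0 : 0 < c0) by (apply Rdiv_lt_0_compat; nra).
    assert (HL : forall d, 0 < d < m /\ psi_alpha_inv P alpha d < s ->
       ln (f0_star P alpha d) = ln c0 + ln (s - gg d) + ln d + ln (mum - d)).
    { intros d hd. destruct (Hf d hd) as [Ef _]. rewrite Ef.
      destruct hd as [hd hd2]. rewrite Hg in * by auto.
      unfold mu_inv, P. cbn [q_min mu_max]. fold a.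
      replace ((s - gg d) * (a * d) / (qm * mum / (mum - d)))
        with (c0 * ((s - gg d) * (d * (mum - d)))) by (unfold c0; field; split; lra).
      assert (0 < s - gg d) by lra. assert (0 < mum - d) by lra.
      assert (0 < d * (mum - d)) by (apply Rmult_lt_0_compat; lra).
      assert (0 < (s - gg d) * (d * (mum - d))) by (apply Rmult_lt_0_compat; lra).
      rewrite !ln_mult by lra. ring. }
    assert (hx' := proj1 (HD x) hx). assert (hy' := proj1 (HD y) hy).
    assert (hxg : gg x < s) by (destruct hx as [? h2]; rewrite Hg in h2 by auto; exact h2).
    assert (hyg : gg y < s) by (destruct hy as [? h2]; rewrite Hg in h2 by auto; exact h2).
    assert (hzm : 0 < t*x+(1-t)*y < m) by nra.
    assert (hzc := Hconv x y t ltac:(lra) ltac:(lra) ht).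
    assert (hz : 0 < t*x+(1-t)*y < m /\ psi_alpha_inv P alpha (t*x+(1-t)*y) < s).
    { split; auto. rewrite Hg by auto. nra. }
    rewrite (HL x hx), (HL y hy), (HL _ hz).
    destruct (ln_concave (s - gg x) (s - gg y) t ltac:(lra) ltac:(lra) ht) as [I1 _].
    assert (I1' : ln (t*(s-gg x)+(1-t)*(s-gg y)) <= ln (s - gg (t*x+(1-t)*y)))
      by (apply ln_le'; nra).
    destruct (ln_concave x y t ltac:(lra) ltac:(lra) ht) as [_ I2].
    specialize (I2 hxy).
    destruct (ln_concave (mum-x) (mum-y) t ltac:(lra) ltac:(lra) ht) as [I3 _].
    replace (t*(mum-x)+(1-t)*(mum-y)) with (mum - (t*x+(1-t)*y)) in I3 by ring.
    lra.
Qed.
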